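(* Let $i\in\mathbb Z^{\geq 0}$ and $j\in\mathbb Z$. Then $$R_{i,j}=R_{i+1,F(i+1)+j}\cup R_{i+2,j},$$ and the union is disjoint.
   Context: $\varphi=\frac{1+\sqrt5}{2}$ is the golden ratio; $a(n)=\lfloor n\varphi\rfloor$ and $b(n)=\lfloor n\varphi^2\rfloor$ for $n\in\mathbb N=\{1,2,\dots\}$ are the lower and upper Wythoff sequences. $F$ is the Fibonacci sequence with $F(0)=0$, $F(1)=F(2)=1$, $F(n)=F(n-1)+F(n-2)$. For $i\in\mathbb Z^{\geq 0}$ and $j\in\mathbb Z$, the sequence $f_{i,j}$ is defined by $f_{i,j}(n)=F(i+1)a(n)+F(i)n-j$ for $n\in\mathbb N$, and $R_{i,j}=\{f_{i,j}(n)\mid n\in\mathbb N\}$ is its range. *)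

(* Defs.v *)
From Stdlib Require Import Reals ZArith Lia Lra.
Open Scope R_scope.

(* floor on the reals: up x is the unique integer with x < up x <= x + 1 *)
Definition floorR (x : R) : Z := (up x - 1)%Z.

Definition phi : R := (1 + sqrt 5) / 2.

Definition wyth_a (n : nat) : Z := floorR (INR n * phi).

Fixpoint fib (n : nat) : nat :=
  match n with
  | O => 0
  | S m => match m with O => 1 | S k => fib m + fib k end
  end%nat.

Definition f_ij (i : nat) (j : Z) (n : nat) : Z :=
  (Z.of_nat (fib (S i)) * wyth_a n + Z.of_nat (fib i) * Z.of_nat n - j)%Z.

Definition R_ij (i : nat) (j : Z) (m : Z) : Prop :=
  exists n : nat, (1 <= n)%nat /\ f_ij i j n = m.

(* Main.v *)
Require Import Defs.
From Stdlib Require Import Reals ZArith Lia Lra Psatz.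

Open Scope R_scope.

Lemma floor_spec x : IZR (floorR x) <= x < IZR (floorR x) + 1.
Proof.
  unfold floorR. destruct (archimed x) as [H1 H2].
  rewrite minus_IZR. simpl. lra.
Qed.

Lemma floor_uniq x z : IZR z <= x < IZR z + 1 -> floorR x = z.
Proof.
  intros [H1 H2]. unfold floorR.
  assert (z + 1 = up x)%Z.
  { apply tech_up; rewrite plus_IZR; simpl; lra. }
  lia.
Qed.

Lemma phi_sq : phi * phi = phi + 1.
Proof.
  unfold phi. assert (H := sqrt_sqrt 5 ltac:(lra)). nra.
Qed.

Lemma phi_bounds : 3/2 < phi < 2.
Proof.
  unfold phi. assert (H := sqrt_sqrt 5 ltac:(lra)).
  assert (H0 := sqrt_pos 5). nra.
Qed.

Lemma five_sq_aux : forall N (n k : Z), (Z.abs_nat n < N)%nat -> (5*n*n = k*k)%Z -> n = 0%Z.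
Proof.
  induction N; intros n k HN H. lia.
  destruct (Z.eq_dec n 0) as [|Hn]; auto.
  assert (Hk := Z.div_mod k 5 ltac:(lia)).
  assert (Hr := Z.mod_pos_bound k 5 ltac:(lia)).
  set (q := (k / 5)%Z) in *. set (r := (k mod 5)%Z) in *.
  assert (r = 0)%Z.
  { assert (Hx : (r*r = 5 * (n*n - 5*q*q - 2*q*r))%Z) by nia.
    set (X := (n*n - 5*q*q - 2*q*r)%Z) in *.
    assert (r = 0 \/ r = 1 \/ r = 2 \/ r = 3 \/ r = 4)%Z as Hc by lia.
    destruct Hc as [E|[E|[E|[E|E]]]]; rewrite E in Hx; lia. }
  assert (Hq : (5*q*q = n*n)%Z) by nia.
  assert (q = 0)%Z.
  { apply (IHN q n); [|lia].
    assert (0 < n*n)%Z by (destruct (Z.lt_total n 0) as [Hl|[Hl|Hl]]; [nia|lia|nia]).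
    assert (Hqq : (q*q < n*n)%Z) by nia.
    rewrite <- (Z.abs_square q), <- (Z.abs_square n) in Hqq.
    assert (0 <= Z.abs q)%Z by lia. assert (Z.abs q < Z.abs n)%Z by nia. lia. }
  nia.
Qed.

Lemma irr n m : (n <> 0)%Z -> IZR n * phi <> IZR m.
Proof.
  intros Hn H. unfold phi in H.
  assert (Hs := sqrt_sqrt 5 ltac:(lra)).
  set (s := sqrt 5) in *.
  assert (Hs2 : IZR n * s = IZR (2*m - n)) by (rewrite minus_IZR, mult_IZR; simpl; lra).
  assert (IZR (5*n*n) = IZR ((2*m-n)*(2*m-n))).
  { rewrite !mult_IZR. rewrite <- Hs2. simpl. nra. }
  apply eq_IZR in H0.
  apply Hn. apply (five_sq_aux (S (Z.abs_nat n)) n (2*m-n)); auto.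
Qed.

Lemma a_spec n : (1 <= n)%nat ->
  IZR (wyth_a n) < INR n * phi < IZR (wyth_a n) + 1.
Proof.
  intros Hn. unfold wyth_a. destruct (floor_spec (INR n * phi)) as [H1 H2].
  split; [|lra]. destruct H1 as [H1|H1]; [lra|].
  exfalso. rewrite INR_IZR_INZ in H1. apply (irr (Z.of_nat n) (floorR (IZR (Z.of_nat n) * phi))).
  lia. lra.
Qed.

Lemma a_ge1 k : (1 <= k)%nat -> (1 <= wyth_a k)%Z.
Proof.
  intros Hk. assert (H := a_spec k Hk). assert (H1 := phi_bounds).
  apply le_INR in Hk. simpl in Hk.
  assert (0 < IZR (wyth_a k)+1) by nra.
  assert (0 < wyth_a k + 1)%Z by (apply lt_IZR; rewrite plus_IZR; simpl; lra).
  destruct (Z.eq_dec (wyth_a k) 0) as [He|]; [|lia].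
  rewrite He in H. exfalso. simpl in H. nra.
Qed.

Lemma a_a k n : (1 <= k)%nat -> Z.of_nat n = wyth_a k ->
  wyth_a n = (wyth_a k + Z.of_nat k - 1)%Z.
Proof.
  intros Hk Hn. unfold wyth_a at 1. apply floor_uniq.
  assert (H := a_spec k Hk). assert (Hb := phi_bounds). assert (Hp := phi_sq).
  rewrite INR_IZR_INZ, Hn. rewrite INR_IZR_INZ in H.
  rewrite minus_IZR, plus_IZR. simpl.
  set (A := IZR (wyth_a k)) in *. set (K := IZR (Z.of_nat k)) in *.
  assert (E : A * phi = A + K - (K*phi - A)*(phi-1)).
  { replace (A + K - (K*phi - A)*(phi-1)) with (A*phi + K - K*(phi*phi) + K*phi) by ring.
    rewrite Hp. ring. }
  assert (0 < K*phi - A < 1) by lra.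
  rewrite E. nra.
Qed.

Lemma a_b k n : (1 <= k)%nat -> Z.of_nat n = (wyth_a k + Z.of_nat k)%Z ->
  wyth_a n = (2 * wyth_a k + Z.of_nat k)%Z.
Proof.
  intros Hk Hn. unfold wyth_a at 1. apply floor_uniq.
  assert (H := a_spec k Hk). assert (Hb := phi_bounds). assert (Hp := phi_sq).
  rewrite INR_IZR_INZ, Hn. rewrite INR_IZR_INZ in H.
  rewrite plus_IZR, mult_IZR, plus_IZR. simpl.
  set (A := IZR (wyth_a k)) in *. set (K := IZR (Z.of_nat k)) in *.
  assert (E : A * phi = A + K - (K*phi - A)*(phi-1)).
  { replace (A + K - (K*phi - A)*(phi-1)) with (A*phi + K - K*(phi*phi) + K*phi) by ring.
    rewrite Hp. ring. }
  assert (0 < K*phi - A < 1) by lra.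
  replace ((A + K) * phi) with (A*phi + K*phi) by ring.
  rewrite E. nra.
Qed.

Lemma a_disj k k' : (1 <= k)%nat -> (1 <= k')%nat ->
  wyth_a k <> (wyth_a k' + Z.of_nat k')%Z.
Proof.
  intros Hk Hk' He.
  assert (H := a_spec k Hk). assert (H' := a_spec k' Hk').
  assert (Hb := phi_bounds). assert (Hp := phi_sq).
  rewrite INR_IZR_INZ in H, H'.
  set (m := wyth_a k) in *.
  assert (E : IZR (wyth_a k') = IZR m - IZR (Z.of_nat k')) by (rewrite He, plus_IZR; ring).
  rewrite E in H'.
  remember (IZR m) as M eqn:EM. remember (IZR (Z.of_nat k)) as K eqn:EK. remember (IZR (Z.of_nat k')) as K' eqn:EK'.
  assert (HK: K*phi*(phi-1) = K) by (replace (K*phi*(phi-1)) with (K*(phi*phi) - K*phi) by ring; rewrite Hp; ring).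
  assert (HK': K'*(phi+1)*(2-phi) = K') by (replace (K'*(phi+1)*(2-phi)) with (K'*(phi+2) - K'*(phi*phi)) by ring; rewrite Hp; ring).
  assert (K > M*(phi-1)) by (assert (0 < (K*phi - M)*(phi-1)) by (apply Rmult_lt_0_compat; lra); nra).
  assert (K < (M+1)*(phi-1)) by (assert (0 < (M+1 - K*phi)*(phi-1)) by (apply Rmult_lt_0_compat; lra); nra).
  assert (K' > M*(2-phi)) by (assert (0 < (K'*(phi+1) - M)*(2-phi)) by (apply Rmult_lt_0_compat; lra); nra).
  assert (K' < (M+1)*(2-phi)) by (assert (0 < (M+1 - K'*(phi+1))*(2-phi)) by (apply Rmult_lt_0_compat; lra); nra).
  assert (m < Z.of_nat k + Z.of_nat k')%Z by (apply lt_IZR; rewrite plus_IZR, <- EM, <- EK, <- EK'; lra).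
  assert (Z.of_nat k + Z.of_nat k' < m + 1)%Z by (apply lt_IZR; rewrite !plus_IZR, <- EM, <- EK, <- EK'; simpl; lra).
  lia.
Qed.

Lemma a_cover (n : nat) : (1 <= n)%nat ->
  (exists k, (1 <= k)%nat /\ Z.of_nat n = wyth_a k) \/
  (exists k, (1 <= k)%nat /\ Z.of_nat n = (wyth_a k + Z.of_nat k)%Z).
Proof.
  intros Hn. assert (Hb := phi_bounds). assert (Hp := phi_sq).
  set (m := Z.of_nat n).
  assert (Hm : (1 <= m)%Z) by (unfold m; lia).
  assert (HM : 1 <= IZR m) by (apply IZR_le; auto).
  set (q := floorR (IZR m * (phi - 1))).
  destruct (floor_spec (IZR m * (phi - 1))) as [Hq1 Hq2]. fold q in Hq1, Hq2. clearbody m q.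
  destruct (Rlt_le_dec (IZR (q+1) * phi) (IZR m + 1)) as [Hc|Hc].
  - rewrite plus_IZR in Hc. simpl in Hc.
    assert (Hq0 : (0 <= q)%Z). { assert (0 < q + 1)%Z; [apply lt_IZR; rewrite plus_IZR; simpl; nra | lia]. }
    left. exists (Z.to_nat (q+1)). split. lia.
    unfold wyth_a. symmetry. apply floor_uniq.
    rewrite INR_IZR_INZ, Z2Nat.id by lia. rewrite plus_IZR. simpl. nra.
  - assert (Hq0 : (0 <= q)%Z). { assert (0 < q + 1)%Z; [apply lt_IZR; rewrite plus_IZR; simpl; nra | lia]. }
    assert (Hc' : IZR m + 1 < IZR (q+1)*phi).
    { destruct Hc as [Hc|Hc]; auto. exfalso. apply (irr (q+1) (m+1)). lia. rewrite !plus_IZR. rewrite !plus_IZR in Hc. simpl. simpl in Hc. lra. }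
    rewrite plus_IZR in Hc'. simpl in Hc'.
    assert (Hqm : (q < m)%Z) by (apply lt_IZR; nra).
    right. exists (Z.to_nat (m - q)). split. lia.
    rewrite Z2Nat.id by lia.
    assert (wyth_a (Z.to_nat (m - q)) = q).
    { unfold wyth_a. apply floor_uniq.
      rewrite INR_IZR_INZ, Z2Nat.id by lia. rewrite minus_IZR. nra. }
    lia.
Qed.

Lemma a_mono n n' : (n < n')%nat -> (wyth_a n < wyth_a n')%Z.
Proof.
  intros H. unfold wyth_a.
  destruct (floor_spec (INR n * phi)). destruct (floor_spec (INR n' * phi)).
  assert (H' : INR (S n) <= INR n') by (apply le_INR; lia). rewrite S_INR in H'.
  assert (Hb := phi_bounds). assert (0 <= INR n) by apply pos_INR.
  apply lt_IZR. nra.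
Qed.

Lemma fib_pos i : (1 <= fib (S i))%nat.
Proof.
  induction i as [|i IH]. simpl. lia.
  change (fib (S (S i))) with (fib (S i) + fib i)%nat. lia.
Qed.

Lemma f_inj i j n n' : f_ij i j n = f_ij i j n' -> n = n'.
Proof.
  intros H. assert (Hf := fib_pos i). unfold f_ij in H.
  destruct (Nat.lt_trichotomy n n') as [Hl|[Hl|Hl]]; auto; exfalso.
  - assert (Ha := a_mono _ _ Hl). nia.
  - assert (Ha := a_mono _ _ Hl). nia.
Qed.

Lemma fibSS i : Z.of_nat (fib (S (S i))) = (Z.of_nat (fib (S i)) + Z.of_nat (fib i))%Z.
Proof. change (fib (S (S i))) with (fib (S i) + fib i)%nat. lia. Qed.

Lemma f_a i j k n : (1 <= k)%nat -> Z.of_nat n = wyth_a k ->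
  f_ij i j n = f_ij (S i) (Z.of_nat (fib (S i)) + j)%Z k.
Proof.
  intros Hk Hn. unfold f_ij. rewrite (a_a k n Hk Hn), Hn, fibSS. ring.
Qed.

Lemma f_b i j k n : (1 <= k)%nat -> Z.of_nat n = (wyth_a k + Z.of_nat k)%Z ->
  f_ij i j n = f_ij (S (S i)) j k.
Proof.
  intros Hk Hn. unfold f_ij. rewrite (a_b k n Hk Hn), Hn, !fibSS. ring.
Qed.

Theorem theorem2p3 (i : nat) (j : Z) :
  (forall m : Z,
     R_ij i j m <-> (R_ij (S i) (Z.of_nat (fib (S i)) + j)%Z m \/ R_ij (S (S i)) j m)) /\
  (forall m : Z, ~ (R_ij (S i) (Z.of_nat (fib (S i)) + j)%Z m /\ R_ij (S (S i)) j m)).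
Proof.
  split.
  - intros m. split.
    + intros [n [Hn Hf]]. destruct (a_cover n Hn) as [[k [Hk E]]|[k [Hk E]]].
      * left. exists k. split; auto. rewrite <- (f_a i j k n Hk E). auto.
      * right. exists k. split; auto. rewrite <- (f_b i j k n Hk E). auto.
    + intros [[k [Hk Hf]]|[k [Hk Hf]]].
      * assert (H1 := a_ge1 k Hk). exists (Z.to_nat (wyth_a k)). split. lia.
        rewrite (f_a i j k); auto. lia.
      * assert (H1 := a_ge1 k Hk). exists (Z.to_nat (wyth_a k + Z.of_nat k)). split. lia.
        rewrite (f_b i j k); auto. lia.
  - intros m [[k [Hk Hf]] [k' [Hk' Hf']]].
    assert (H1 := a_ge1 k Hk). assert (H2 := a_ge1 k' Hk').
    rewrite <- (f_a i j k (Z.to_nat (wyth_a k))) in Hf by (auto; lia).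
    rewrite <- (f_b i j k' (Z.to_nat (wyth_a k' + Z.of_nat k'))) in Hf' by (auto; lia).
    rewrite <- Hf' in Hf. apply f_inj in Hf.
    apply (a_disj k k' Hk Hk'). lia.
Qed.
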